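(* Let $\alpha\in(1/3,1)$ and $v\in\mathcal{C}^\alpha(\mathbb{R}^d)$. Let $\varepsilon>0$ with $(2+\varepsilon)\alpha>1$ and let $F\in C^{2+\varepsilon}(\mathbb{R}^d,\mathbb{R})$. Then for all $t\in[0,1]$ the limit $\lim_{N\to\infty}\int_0^tS_N(\mathrm{D}F(v))(s)\,d(S_Nv)(s)$ exists and \[ F(v(t))-F(v(0))=\lim_{N\to\infty}\int_0^tS_N(\mathrm{D}F(v))(s)\,d(S_Nv)(s). \] (No assumption on the Lévy area of $v$ is needed.)
   Context: Index set: pairs $(p,m)$ with either $p=-1,m=0$, or $p\in\mathbb{N}=\{0,1,2,\dots\}$ and $0\le m\le 2^p$. For $p\in\mathbb{N}$, $1\le m\le 2^p$ set $t^0_{pm}=(m-1)2^{-p}$, $t^1_{pm}=(2m-1)2^{-p-1}$, $t^2_{pm}=m2^{-p}$. Rescaled Haar functions: for $p\in\mathbb{N}$, $1\le m\le 2^p$, $\chi_{pm}=2^p$ on $[t^0_{pm},t^1_{pm})$, $=-2^p$ on $[t^1_{pm},t^2_{pm})$, $=0$ elsewhere; $\chi_{00}\equiv1$; $\chi_{p0}\equiv0$ for $p\ge1$. Rescaled Schauder functions: $\varphi_{pm}(t)=\int_0^t\chi_{pm}(s)\,ds$ for $p\in\mathbb{N}$, and $\varphi_{-10}\equiv1$. For continuous $f:[0,1]\to E$ ($E$ a finite-dimensional normed space), coefficients: $f_{-10}=f(0)$, $f_{00}=f(1)-f(0)$, $f_{p0}=0$ for $p\ge1$, $f_{pm}=2f(t^1_{pm})-f(t^0_{pm})-f(t^2_{pm})$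 for $p\in\mathbb{N},m\ge1$. $\Delta_pf=\sum_{m=0}^{2^p}f_{pm}\varphi_{pm}$, $S_Nf=\sum_{p=-1}^N\Delta_pf$ (the piecewise linear interpolation of $f$ at the points $k2^{-N-1}$). For $\alpha>0$, $\|f\|_\alpha:=\sup_{p,m}2^{p\alpha}|f_{pm}|$ and $\mathcal{C}^\alpha(E):=\{f\in C([0,1],E):\|f\|_\alpha<\infty\}$. For Lipschitz $g$, $\int_0^tf\,dg:=\int_0^tf(s)g'(s)\,ds$. $C^{2+\varepsilon}$: twice continuously differentiable with locally $\varepsilon$-Hölder second derivative (for $\varepsilon\in(0,1)$). $\mathrm{D}F$ is the gradient, viewed as an element of $L(\mathbb{R}^d,\mathbb{R})$. *)

(* Defs.v *)
From Stdlib Require Import Reals Lra Lia List.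
Open Scope R_scope.

(* Vectors of R^d are represented as functions nat -> R; only the
   coordinates i < d matter. *)

Fixpoint sumd (d : nat) (h : nat -> R) : R :=
  match d with O => 0 | S k => sumd k h + h k end.

Fixpoint nrm (d : nat) (x : nat -> R) : R :=
  match d with O => 0 | S k => Rmax (nrm k x) (Rabs (x k)) end.

Definition vadd (x y : nat -> R) : nat -> R := fun i => x i + y i.
Definition vsub (x y : nat -> R) : nat -> R := fun i => x i - y i.

Definition rpow (r a : R) : R := if Rlt_dec 0 r then Rpower r a else 0.

Definition tt0 (p m : nat) : R := INR (m - 1) / 2 ^ p.
Definition tt1 (p m : nat) : R := INR (2 * m - 1) / 2 ^ (S p).
Definition tt2 (p m : nat) : R := INR m / 2 ^ p.

Definition chi (p m : nat) (s : R) : R :=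
  match m with
  | O => match p with O => 1 | S _ => 0 end
  | S _ =>
    if Rle_dec (tt0 p m) s then
      if Rlt_dec s (tt1 p m) then 2 ^ p
      else if Rlt_dec s (tt2 p m) then - 2 ^ p else 0
    else 0
  end.

(* Rescaled Schauder functions phi_{pm}(t) = int_0^t chi_{pm}(s) ds,
   written in closed form (p in N, 0 <= m <= 2^p):
   phi_{00}(t) = t, phi_{p0} = 0 for p >= 1, and for m >= 1 the hat
   function supported on [t0,t2] with peak 1/2 at t1. *)
Definition phi (p m : nat) (t : R) : R :=
  match m with
  | O => match p with O => t | S _ => 0 end
  | S _ =>
    if Rle_dec t (tt0 p m) then 0
    else if Rle_dec t (tt1 p m) then 2 ^ p * (t - tt0 p m)
    else if Rle_dec t (tt2 p m) then 2 ^ p * (tt2 p m - t)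
    else 0
  end.
(* phi_{-1,0} = 1 is handled separately in SN below. *)

Definition coef (f : R -> R) (p m : nat) : R :=
  match m with
  | O => match p with O => f 1 - f 0 | S _ => 0 end
  | S _ => 2 * f (tt1 p m) - f (tt0 p m) - f (tt2 p m)
  end.
(* f_{-1,0} = f 0 *)

(* S_N f = sum_{p=-1}^N Delta_p f, Delta_p f = sum_{m=0}^{2^p} f_{pm} phi_{pm};
   for real-valued f (vector-valued functions are treated componentwise). *)
Definition SN (f : R -> R) (N : nat) (t : R) : R :=
  f 0 * 1 +
  sum_f_R0 (fun p => sum_f_R0 (fun m => coef f p m * phi p m t) (Nat.pow 2 p)) N.

Definition SNv (f : R -> nat -> R) (N : nat) : R -> nat -> R :=
  fun t i => SN (fun u => f u i) N t.

Definition coefv (f : R -> nat -> R) (p m : nat) : nat -> R :=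
  fun i => coef (fun u => f u i) p m.

(* f in C^alpha(R^d): f continuous on [0,1] and
   ||f||_alpha = sup_{p,m} 2^{p alpha} |f_{pm}| < infinity
   (the index p = -1 contributes 2^{-alpha} |f(0)|). *)
Definition continuous_on01 (g : R -> R) : Prop :=
  forall t, 0 <= t <= 1 -> forall e, e > 0 -> exists delta, delta > 0 /\
    forall s, 0 <= s <= 1 -> Rabs (s - t) < delta -> Rabs (g s - g t) < e.

Definition CalphaV (d : nat) (alpha : R) (f : R -> nat -> R) : Prop :=
  (forall i, (i < d)%nat -> continuous_on01 (fun t => f t i)) /\
  exists C : R,
    Rpower 2 (- alpha) * nrm d (f 0) <= C /\
    forall p m : nat, (m <= Nat.pow 2 p)%nat ->
      Rpower 2 (INR p * alpha) * nrm d (coefv f p m) <= C.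

(* F : R^d -> R is C^{2+eps}, with gradient DF (DF i = i-th partial
   derivative) and Hessian D2F: F is (Frechet) differentiable with
   derivative h |-> sum_i DF i x * h i, each DF i is differentiable with
   derivative h |-> sum_j D2F i j x * h j, the D2F i j are continuous and
   locally eps-Hoelder (eps-Hoelder on every bounded set). *)
Definition FrechetD (d : nat) (G : (nat -> R) -> R) (DG : nat -> (nat -> R) -> R)
  : Prop :=
  forall x e, e > 0 -> exists delta, delta > 0 /\
    forall h, nrm d h < delta ->
      Rabs (G (vadd x h) - G x - sumd d (fun i => DG i x * h i)) <= e * nrm d h.

Definition C2eps (d : nat) (eps : R) (F : (nat -> R) -> R)
  (DF : nat -> (nat -> R) -> R) (D2F : nat -> nat -> (nat -> R) -> R) : Prop :=
  FrechetD d F DF /\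
  (forall i, (i < d)%nat -> FrechetD d (DF i) (D2F i)) /\
  (forall i j, (i < d)%nat -> (j < d)%nat ->
     forall x e, e > 0 -> exists delta, delta > 0 /\
       forall y, nrm d (vsub y x) < delta -> Rabs (D2F i j y - D2F i j x) < e) /\
  (forall i j, (i < d)%nat -> (j < d)%nat ->
     forall K, K > 0 -> exists C, forall x y, nrm d x <= K -> nrm d y <= K ->
       Rabs (D2F i j x - D2F i j y) <= C * rpow (nrm d (vsub x y)) eps).

(* IntFdG d f g t I : the integral int_0^t f dg := int_0^t f(s) g'(s) ds
   (with f(s) in L(R^d,R) ~ R^d, so the integrand is sum_i f_i(s) g_i'(s))
   exists as a Riemann integral and equals I.  g' is any function agreeing
   with the derivative of g on (0,t) outside a finite set of points
   (Riemann integrals do not see finitely many points, so I is uniquely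
   determined). *)
Definition IntFdG (d : nat) (f g : R -> nat -> R) (t I : R) : Prop :=
  exists (gp : R -> nat -> R) (l : list R),
    (forall s, 0 < s < t -> ~ In s l -> forall i, (i < d)%nat ->
       derivable_pt_lim (fun u => g u i) s (gp s i)) /\
    exists pr : Riemann_integrable (fun s => sumd d (fun i => f s i * gp s i)) 0 t,
      RiemannInt pr = I.

(* Main.v *)
Require Import Defs.
From Stdlib Require Import Reals List.
From Stdlib Require Import Lra Lia FunctionalExtensionality.
Open Scope R_scope.


Lemma sumd_ext d f g : (forall i, (i < d)%nat -> f i = g i) -> sumd d f = sumd d g.
Proof. induction d; simpl; intros H; auto. rewrite IHd by (intros; apply H; lia). rewrite H by lia; auto. Qed.

Lemma sumd_plus d f g : sumd d (fun i => f i + g i) = sumd d f + sumd d g.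
Proof. induction d; simpl; [ring|rewrite IHd; ring]. Qed.
Lemma sumd_minus d f g : sumd d (fun i => f i - g i) = sumd d f - sumd d g.
Proof. induction d; simpl; [ring|rewrite IHd; ring]. Qed.
Lemma sumd_scal d c f : sumd d (fun i => c * f i) = c * sumd d f.
Proof. induction d; simpl; [ring|rewrite IHd; ring]. Qed.
Lemma sumd_le_const d f c : (forall i, (i < d)%nat -> Rabs (f i) <= c) -> Rabs (sumd d f) <= INR d * c.
Proof. induction d; cbn [sumd]; intros H.
 - rewrite Rabs_R0; simpl; lra.
 - rewrite S_INR. eapply Rle_trans; [apply Rabs_triang|].
   specialize (IHd (fun i Hi => H i ltac:(lia))). specialize (H d ltac:(lia)). lra. Qed.
Lemma sumd_abs d f : Rabs (sumd d f) <= sumd d (fun i => Rabs (f i)).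
Proof. induction d; simpl. rewrite Rabs_R0; lra. eapply Rle_trans; [apply Rabs_triang|]. lra. Qed.
Lemma sumd_le d f g : (forall i, (i<d)%nat -> f i <= g i) -> sumd d f <= sumd d g.
Proof. induction d; simpl; intros H. lra. specialize (IHd (fun i Hi => H i ltac:(lia))). specialize (H d ltac:(lia)). lra. Qed.
Lemma sumd_telescope k (u : nat -> R) : sumd k (fun j => u (S j) - u j) = u k - u O.
Proof. induction k; simpl. ring. rewrite IHk; ring. Qed.
Lemma sumd_bound_uniform k f c : (forall j, (j<k)%nat -> Rabs (f j) <= c) -> Rabs (sumd k f) <= INR k * c.
Proof. apply sumd_le_const. Qed.

Lemma nrm_nonneg d x : 0 <= nrm d x.
Proof. induction d; simpl. lra. eapply Rle_trans; [apply IHd|apply Rmax_l]. Qed.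
Lemma nrm_coord d x i : (i < d)%nat -> Rabs (x i) <= nrm d x.
Proof. induction d; simpl; intros H. lia. destruct (Nat.eq_dec i d). subst. apply Rmax_r.
 eapply Rle_trans; [apply IHd; lia|apply Rmax_l]. Qed.
Lemma nrm_le d x c : 0 <= c -> (forall i, (i<d)%nat -> Rabs (x i) <= c) -> nrm d x <= c.
Proof. induction d; simpl; intros Hc H. lra. apply Rmax_lub. apply IHd; auto. apply H; lia. Qed.
Lemma nrm_scal d c x : nrm d (fun i => c * x i) = Rabs c * nrm d x.
Proof. induction d; simpl. ring. rewrite IHd, Rabs_mult. 
 destruct (Req_dec (Rabs c) 0) as [E|E]. rewrite E. rewrite !Rmult_0_l. unfold Rmax. destruct Rle_dec; lra.
 assert (0 < Rabs c) by (pose proof (Rabs_pos c); lra).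
 unfold Rmax. destruct (Rle_dec (nrm d x) (Rabs (x d))); destruct Rle_dec; try lra; nra. Qed.
Lemma nrm_ext d x y : (forall i, (i<d)%nat -> x i = y i) -> nrm d x = nrm d y.
Proof. induction d; simpl; intros H. auto. rewrite IHd by (intros; apply H; lia). rewrite H by lia. auto. Qed.

Lemma dpl_ext f g x l l' : (forall y, f y = g y) -> l = l' -> derivable_pt_lim f x l -> derivable_pt_lim g x l'.
Proof. intros H E D. replace g with f by (apply functional_extensionality; auto). subst; auto. Qed.

Lemma sumd_deriv d (f : nat -> R -> R) l s :
  (forall i, (i<d)%nat -> derivable_pt_lim (f i) s (l i)) ->
  derivable_pt_lim (fun u => sumd d (fun i => f i u)) s (sumd d l).
Proof. induction d; intros H; cbn [sumd].
 - apply dpl_ext with (fct_cte 0) 0. reflexivity. reflexivity. apply derivable_pt_lim_const.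
 - apply dpl_ext with ((fun u => sumd d (fun i => f i u)) + f d)%F (sumd d l + l d). reflexivity. reflexivity.
   apply derivable_pt_lim_plus. apply IHd; intros; apply H; lia. apply H; lia. Qed.

Lemma seg_deriv d G DG : FrechetD d G DG -> forall x h tau,
  derivable_pt_lim (fun s => G (fun i => x i + s * h i)) tau
     (sumd d (fun i => DG i (fun i => x i + tau * h i) * h i)).
Proof. intros HF x h tau eps Heps.
 set (y := fun i => x i + tau * h i).
 destruct (HF y (eps / (2 * (nrm d h + 1)))) as [del [Hdel H]].
 { pose proof (nrm_nonneg d h). apply Rdiv_lt_0_compat; lra. }
 pose proof (nrm_nonneg d h).
 assert (Hp : 0 < del / (nrm d h + 1)) by (apply Rdiv_lt_0_compat; lra).
 exists (mkposreal _ Hp). simpl. intros hh Hhh Hlt.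
 specialize (H (fun i => hh * h i)). rewrite nrm_scal in H.
 assert (Hlt2: Rabs hh * nrm d h < del).
 { apply Rlt_le_trans with (del / (nrm d h + 1) * (nrm d h + 1)). 2: { right; field; lra. }
   assert (0 <= Rabs hh) by apply Rabs_pos. nra. }
 specialize (H Hlt2).
 replace (fun i => x i + (tau + hh) * h i) with (vadd y (fun i => hh * h i)) by
   (apply functional_extensionality; intros i; unfold vadd, y; ring).
 fold y.
 replace (sumd d (fun i => DG i y * (hh * h i))) with (hh * sumd d (fun i => DG i y * h i)) in H
   by (rewrite <- sumd_scal; apply sumd_ext; intros; ring).
 replace ((G (vadd y (fun i => hh * h i)) - G y) / hh - sumd d (fun i => DG i y * h i))
   with ((G (vadd y (fun i => hh * h i)) - G y - hh * sumd d (fun i => DG i y * h i)) / hh) by (field; auto).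
 unfold Rdiv at 1. rewrite Rabs_mult, Rabs_inv by auto.
 assert (0 < Rabs hh) by (apply Rabs_pos_lt; auto).
 apply Rle_lt_trans with (eps / (2 * (nrm d h + 1)) * Rabs hh * nrm d h * / Rabs hh).
 apply Rmult_le_compat_r. left; apply Rinv_0_lt_compat; auto. lra.
 replace (eps / (2 * (nrm d h + 1)) * Rabs hh * nrm d h * / Rabs hh) with (eps * (nrm d h / (2*(nrm d h + 1)))) by (field; lra).
 assert (nrm d h / (2 * (nrm d h + 1)) < 1). { apply Rmult_lt_reg_r with (2*(nrm d h + 1)). lra. unfold Rdiv. rewrite Rmult_assoc, Rinv_l by lra. lra. }
 nra. Qed.

Lemma sumd_nonneg d f : (forall i, (i<d)%nat -> 0 <= f i) -> 0 <= sumd d f.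
Proof. induction d; cbn [sumd]; intros H. lra. specialize (IHd (fun i Hi => H i ltac:(lia))). specialize (H d ltac:(lia)). lra. Qed.

Lemma Frechet_cont d G DG : FrechetD d G DG -> forall x e, e > 0 -> exists del, del > 0 /\
  forall y, nrm d (vsub y x) < del -> Rabs (G y - G x) < e.
Proof. intros HF x e He. destruct (HF x 1 ltac:(lra)) as [d1 [Hd1 H]].
 set (S := sumd d (fun i => Rabs (DG i x))).
 assert (HS : 0 <= S) by (unfold S; apply sumd_nonneg; intros; apply Rabs_pos).
 exists (Rmin d1 (e / (S + 2))). split. apply Rmin_pos; auto. apply Rdiv_lt_0_compat; lra.
 intros y Hy. assert (Hy1 : nrm d (vsub y x) < d1) by (eapply Rlt_le_trans; [apply Hy|apply Rmin_l]).
 assert (Hy2 : nrm d (vsub y x) < e / (S+2)) by (eapply Rlt_le_trans; [apply Hy|apply Rmin_r]).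
 specialize (H _ Hy1). replace (vadd x (vsub y x)) with y in H by (apply functional_extensionality; intro; unfold vadd, vsub; ring).
 assert (Hs : Rabs (sumd d (fun i => DG i x * vsub y x i)) <= S * nrm d (vsub y x)).
 { eapply Rle_trans. apply sumd_abs. unfold S. rewrite Rmult_comm, <- sumd_scal. apply sumd_le. intros i Hi.
   rewrite Rabs_mult. pose proof (nrm_coord d (vsub y x) i Hi). pose proof (Rabs_pos (DG i x)). nra. }
 pose proof (nrm_nonneg d (vsub y x)).
 assert (Rabs (G y - G x) <= (S + 1) * nrm d (vsub y x)).
 { pose proof (Rabs_triang (G y - G x - sumd d (fun i => DG i x * vsub y x i)) (sumd d (fun i => DG i x * vsub y x i))).
   replace (G y - G x - sumd d (fun i => DG i x * vsub y x i) + sumd d (fun i => DG i x * vsub y x i)) with (G y - G x) in H1 by ring. lra. }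
 apply Rle_lt_trans with ((S+1) * nrm d (vsub y x)). auto.
 apply Rle_lt_trans with ((S+2) * nrm d (vsub y x)). nra.
 apply Rmult_lt_reg_r with (/ (S+2)). apply Rinv_0_lt_compat; lra.
 replace ((S + 2) * nrm d (vsub y x) * / (S + 2)) with (nrm d (vsub y x)) by (field; lra). exact Hy2. Qed.

Lemma trap_abs (phi0 psi psi2 : R -> R) L :
  (forall tau, 0 <= tau <= 1 -> derivable_pt_lim phi0 tau (psi tau)) ->
  (forall tau, 0 <= tau <= 1 -> derivable_pt_lim psi tau (psi2 tau)) ->
  (forall a b, 0 <= a <= 1 -> 0 <= b <= 1 -> Rabs (psi2 a - psi2 b) <= L) ->
  Rabs (phi0 1 - phi0 0 - (psi 0 + psi 1) / 2) <= L / 2.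
Proof. intros H1 H2 H3.
 set (E := fun tau => phi0 tau - phi0 0 - tau * (psi 0 + psi tau) / 2).
 set (E' := fun tau => psi tau - ((psi 0 + psi tau) / 2 + tau * psi2 tau / 2)).
 assert (HE : forall tau, 0 <= tau <= 1 -> derivable_pt_lim E tau (E' tau)).
 { intros tau Ht.
   eapply dpl_ext with ((phi0 - fct_cte (phi0 0)) - (id * ((fct_cte (psi 0) + psi) * fct_cte (/2))))%F _; cycle 2.
   - apply derivable_pt_lim_minus. apply derivable_pt_lim_minus. auto. apply derivable_pt_lim_const.
     apply derivable_pt_lim_mult. apply derivable_pt_lim_id. apply derivable_pt_lim_mult.
     apply derivable_pt_lim_plus. apply derivable_pt_lim_const. auto. apply derivable_pt_lim_const.
   - intros y. unfold E, minus_fct, mult_fct, plus_fct, fct_cte, id. field.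
   - unfold E', minus_fct, mult_fct, plus_fct, fct_cte, id. field. }
 assert (HB : forall tau, 0 <= tau <= 1 -> Rabs (E' tau) <= L / 2).
 { intros tau Ht. destruct (Req_dec tau 0) as [Z|Z].
   - subst. unfold E'. replace (psi 0 - ((psi 0 + psi 0) / 2 + 0 * psi2 0 / 2)) with 0 by field.
     rewrite Rabs_R0. specialize (H3 0 0 ltac:(lra) ltac:(lra)). pose proof (Rabs_pos (psi2 0 - psi2 0)). lra.
   - destruct (MVT_cor2 psi psi2 0 tau ltac:(lra)) as [c [Hc Hc2]]. intros; apply H2; lra.
     unfold E'. replace (psi tau - ((psi 0 + psi tau) / 2 + tau * psi2 tau / 2)) with (tau * (psi2 c - psi2 tau) / 2)
       by (replace (psi tau) with (psi 0 + psi2 c * (tau - 0)) by lra; field).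
     unfold Rdiv. rewrite !Rabs_mult. rewrite (Rabs_right tau) by lra. rewrite (Rabs_right (/2)) by lra.
     specialize (H3 c tau ltac:(lra) ltac:(lra)). pose proof (Rabs_pos (psi2 c - psi2 tau)). nra. }
 destruct (MVT_cor2 E E' 0 1 ltac:(lra)) as [c [Hc Hc2]]. intros; apply HE; lra.
 replace (phi0 1 - phi0 0 - (psi 0 + psi 1) / 2) with (E 1 - E 0) by (unfold E; field).
 rewrite Hc. replace (1 - 0) with 1 by ring. rewrite Rmult_1_r. apply HB; lra. Qed.

Lemma fin_choice_mono d (P : nat -> R -> Prop) :
  (forall i, (i<d)%nat -> exists C, P i C) -> (forall i C C', P i C -> C <= C' -> P i C') ->
  exists C, 0 <= C /\ forall i, (i<d)%nat -> P i C.
Proof. intros H M. induction d.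
 - exists 0. split. lra. intros; lia.
 - destruct IHd as [C1 [HC1 H1]]. intros; apply H; lia.
   destruct (H d ltac:(lia)) as [C2 H2]. exists (Rmax C1 C2). split. eapply Rle_trans; [apply HC1|apply Rmax_l].
   intros i Hi. destruct (Nat.eq_dec i d). subst. eapply M; [apply H2|apply Rmax_r].
   eapply M; [apply H1; lia|apply Rmax_l]. Qed.

Lemma rpow_nonneg a e : 0 <= rpow a e.
Proof. unfold rpow. destruct Rlt_dec. left; apply exp_pos. lra. Qed.
Lemma rpow_mono a b e : 0 <= a <= b -> 0 < e -> rpow a e <= rpow b e.
Proof. intros H He. unfold rpow. destruct (Rlt_dec 0 a); destruct (Rlt_dec 0 b); try lra.
 apply Rle_Rpower_l; lra. left; apply exp_pos. Qed.

Lemma trap_F d eps F DF D2F : C2eps d eps F DF D2F -> eps > 0 -> forall Bd, Bd > 0 ->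
  exists Ct, 0 <= Ct /\ forall x y : nat -> R, (forall i, (i<d)%nat -> Rabs (x i) <= Bd) ->
   (forall i, (i<d)%nat -> Rabs (y i) <= Bd) ->
   Rabs (F y - F x - sumd d (fun i => (DF i x + DF i y) / 2 * (y i - x i)))
     <= Ct * rpow (nrm d (vsub y x)) eps * nrm d (vsub y x) ^ 2.
Proof. intros [HF [HDF [_ HH]]] Heps Bd HBd.
 destruct (fin_choice_mono d (fun i C => forall j, (j<d)%nat -> forall x y, nrm d x <= Bd -> nrm d y <= Bd ->
      Rabs (D2F i j x - D2F i j y) <= C * rpow (nrm d (vsub x y)) eps)) as [Ch [HCh0 HCh]].
 { intros i Hi. destruct (fin_choice_mono d (fun j C => forall x y, nrm d x <= Bd -> nrm d y <= Bd ->
      Rabs (D2F i j x - D2F i j y) <= C * rpow (nrm d (vsub x y)) eps)) as [C [_ HC]].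
   - intros j Hj. apply (HH i j Hi Hj Bd HBd).
   - intros j C C' HC HCC' x y Hx Hy. eapply Rle_trans. apply HC; auto. apply Rmult_le_compat_r; auto. apply rpow_nonneg.
   - exists C. intros j Hj; apply HC; auto. }
 { intros i C C' HC HCC' j Hj x y Hx Hy. eapply Rle_trans. apply HC; auto. apply Rmult_le_compat_r; auto. apply rpow_nonneg. }
 exists (INR d * INR d * Ch / 2). split. { pose proof (pos_INR d). apply Rmult_le_pos; [|lra]. repeat apply Rmult_le_pos; lra. }
 intros x y Hx Hy.
 set (h := vsub y x). set (H := nrm d h).
 set (z := fun tau i => x i + tau * h i).
 set (psi := fun tau => sumd d (fun i => DF i (z tau) * h i)).
 set (psi2 := fun tau => sumd d (fun i => sumd d (fun j => D2F i j (z tau) * h j) * h i)).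
 assert (Hz : forall tau, 0 <= tau <= 1 -> nrm d (z tau) <= Bd).
 { intros tau Ht. apply nrm_le. lra. intros i Hi. unfold z, h, vsub.
   replace (x i + tau * (y i - x i)) with ((1 - tau) * x i + tau * y i) by ring.
   eapply Rle_trans. apply Rabs_triang. rewrite !Rabs_mult. rewrite (Rabs_right (1-tau)) by lra. rewrite (Rabs_right tau) by lra.
   specialize (Hx i Hi). specialize (Hy i Hi). nra. }
 assert (HH0 : 0 <= H) by apply nrm_nonneg.
 assert (T := trap_abs (fun tau => F (z tau)) psi psi2 (INR d * (INR d * (Ch * rpow H eps * H)) * H)).
 assert (E1 : F (z 1) = F y) by (f_equal; apply functional_extensionality; intro i; unfold z, h, vsub; ring).
 assert (E0 : F (z 0) = F x) by (f_equal; apply functional_extensionality; intro i; unfold z, h, vsub; ring).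
 cbv beta in T. rewrite E1, E0 in T.
 replace ((psi 0 + psi 1)/2) with (sumd d (fun i => (DF i x + DF i y) / 2 * (y i - x i))) in T.
 2:{ unfold psi. rewrite <- sumd_plus. unfold Rdiv. rewrite Rmult_comm, <- sumd_scal. apply sumd_ext. intros i Hi.
     replace (z 1) with y by (apply functional_extensionality; intro j; unfold z, h, vsub; ring).
     replace (z 0) with x by (apply functional_extensionality; intro j; unfold z, h, vsub; ring). unfold h, vsub. ring. }
 eapply Rle_trans. apply T.
 - intros tau Ht. apply (seg_deriv d F DF HF x h tau).
 - intros tau Ht. unfold psi, psi2. apply sumd_deriv. intros i Hi.
   eapply dpl_ext with (mult_real_fct (h i) (fun s => DF i (fun j => x j + s * h j))) _; cycle 2.
   apply derivable_pt_lim_scal. apply (seg_deriv d (DF i) (D2F i) (HDF i Hi) x h tau).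
   intros; unfold mult_real_fct, z; ring. unfold z; ring.
 - intros a b Ha Hb. unfold psi2. rewrite <- sumd_minus. rewrite Rmult_assoc.
   apply sumd_le_const. intros i Hi.
   rewrite <- Rmult_minus_distr_r, <- sumd_minus, Rabs_mult.
   apply Rmult_le_compat; try apply Rabs_pos. 2:{ apply nrm_coord; auto. }
   apply sumd_le_const. intros j Hj. rewrite <- Rmult_minus_distr_r, Rabs_mult.
   apply Rmult_le_compat; try apply Rabs_pos. 2:{ apply nrm_coord; auto. }
   eapply Rle_trans. apply HCh; auto.
   apply Rmult_le_compat_l; auto. apply rpow_mono; auto. split. apply nrm_nonneg.
   replace (nrm d (vsub (z a) (z b))) with (Rabs (a - b) * H).
   assert (Rabs (a - b) <= 1) by (apply Rabs_le; lra). pose proof (Rabs_pos (a-b)). nra.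
   unfold H. rewrite <- nrm_scal. apply nrm_ext. intros. unfold vsub, z. ring.
 - right. unfold H, h. simpl. field. Qed.

Definition X (n k : nat) : R := INR k / 2 ^ n.

Lemma pow2R_pos n : 0 < 2 ^ n. Proof. apply pow_lt; lra. Qed.

Lemma X_mono n a b : (a <= b)%nat -> X n a <= X n b.
Proof. intros H. unfold X. apply Rmult_le_compat_r. left; apply Rinv_0_lt_compat, pow2R_pos. apply le_INR; auto. Qed.
Lemma X_S n k : X n (S k) = X n k + / 2 ^ n.
Proof. unfold X. rewrite S_INR. field. apply pow_nonzero; lra. Qed.
Lemma X_even n k : X (S n) (2*k) = X n k.
Proof. unfold X. rewrite mult_INR. change (2 ^ S n) with (2 * 2 ^ n). replace (INR 2) with 2 by (simpl; ring). field. apply pow_nonzero; lra. Qed.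
Lemma X_odd n k : X (S n) (S (2*k)) = (X n k + X n (S k)) / 2.
Proof. unfold X. rewrite (S_INR (2*k)), mult_INR, (S_INR k). change (2 ^ S n) with (2 * 2 ^ n). replace (INR 2) with 2 by (simpl; ring). field. apply pow_nonzero; lra. Qed.
Lemma X_even2 n k : X (S n) (S (S (2*k))) = X n (S k).
Proof. replace (S (S (2*k))) with (2 * S k)%nat by lia. apply X_even. Qed.
Lemma X_0 n : X n 0 = 0. Proof. unfold X. simpl. field. apply pow_nonzero; lra. Qed.
Lemma X_top n : X n (Nat.pow 2 n) = 1. Proof. unfold X. rewrite pow_INR. replace (INR 2) with 2 by (simpl; ring). field. apply pow_nonzero; lra. Qed.

Lemma tt0_S n k : tt0 n (S k) = X n k.
Proof. unfold tt0, X. replace (S k - 1)%nat with k by lia. auto. Qed.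
Lemma tt1_S n k : tt1 n (S k) = X (S n) (S (2*k)).
Proof. unfold tt1, X. replace (2 * S k - 1)%nat with (S (2*k)) by lia. auto. Qed.
Lemma tt2_S n k : tt2 n (S k) = X n (S k).
Proof. reflexivity. Qed.

Lemma sum_single (u : nat -> R) M j : (forall i, (i <= M)%nat -> i <> j -> u i = 0) -> (j <= M)%nat -> sum_f_R0 u M = u j.
Proof. induction M; intros H Hj.
 - simpl. replace j with 0%nat by lia. auto.
 - simpl. destruct (Nat.eq_dec j (S M)).
   + subst. rewrite (sum_eq_R0 u M). ring. intros i Hi. apply H; lia.
   + rewrite IHM; [| intros; apply H; lia | lia]. rewrite (H (S M)) by lia. ring. Qed.

Lemma phi_zero n m k s : (k < Nat.pow 2 n)%nat -> X n k <= s <= X n (S k) -> m <> k ->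
  phi n (S m) s = 0.
Proof. intros Hk Hs Hm. unfold phi. rewrite tt0_S, tt1_S. change (tt2 n (S m)) with (X n (S m)).
 rewrite X_odd. pose proof (X_S n m). pose proof (pow2R_pos n). assert (0 < / 2^n) by (apply Rinv_0_lt_compat; auto).
 destruct (Nat.lt_ge_cases m k).
 - assert (X n (S m) <= X n k) by (apply X_mono; lia).
   destruct Rle_dec. auto. destruct Rle_dec. lra. destruct Rle_dec. replace s with (X n (S m)) by lra. ring. auto.
 - assert (X n (S k) <= X n m) by (apply X_mono; lia).
   destruct Rle_dec. auto. lra. Qed.

Lemma phi_left n k s : X n k <= s <= X (S n) (S (2*k)) -> phi n (S k) s = 2 ^ n * (s - X n k).
Proof. intros Hs. unfold phi. rewrite tt0_S, tt1_S. change (tt2 n (S k)) with (X n (S k)).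
 destruct Rle_dec. replace s with (X n k) by lra. ring. destruct Rle_dec. auto. lra. Qed.
Lemma phi_right n k s : X (S n) (S (2*k)) <= s <= X n (S k) -> phi n (S k) s = 2 ^ n * (X n (S k) - s).
Proof. intros Hs. rewrite X_odd in *. pose proof (X_S n k). pose proof (pow2R_pos n). assert (0 < / 2^n) by (apply Rinv_0_lt_compat; auto).
 unfold phi. rewrite tt0_S, tt1_S. change (tt2 n (S k)) with (X n (S k)). rewrite X_odd.
 destruct Rle_dec. lra. destruct Rle_dec. replace s with ((X n k + X n (S k)) / 2) by lra. rewrite H. field. lra.
 destruct Rle_dec. auto. lra. Qed.

Definition Hp (f : R -> R) (p : nat) (s : R) : R :=
  sum_f_R0 (fun m => coef f p m * phi p m s) (Nat.pow 2 p) - match p with O => (f 1 - f 0) * s | S _ => 0 end.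

Lemma Hp_val f n k s : (k < Nat.pow 2 n)%nat -> X n k <= s <= X n (S k) ->
  Hp f n s = coef f n (S k) * phi n (S k) s.
Proof. intros Hk Hs. unfold Hp. rewrite decomp_sum.
 2:{ pose proof (Nat.pow_nonzero 2 n). lia. }
 rewrite (sum_single _ _ k).
 - destruct n; simpl; ring.
 - intros i Hi Hik. rewrite (phi_zero n i k s); auto. ring.
 - lia. Qed.

Lemma interp_L f n k s : (k < Nat.pow 2 n)%nat -> X n k <= s <= X n (S k) ->
  f 0 + (f 1 - f 0) * s + sumd n (fun p => Hp f p s) =
  f (X n k) + (f (X n (S k)) - f (X n k)) * (s - X n k) * 2 ^ n.
Proof. revert k s. induction n; intros k' s Hk Hs.
 - simpl in Hk. replace k' with 0%nat by lia. rewrite X_0. replace (X 0 1) with 1 by (unfold X; simpl; field). simpl. ring.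
 - destruct (Nat.Even_or_Odd k') as [[k E]|[k E]]; subst k'.
   + assert (Hk2 : (k < Nat.pow 2 n)%nat) by (simpl in Hk; lia).
     rewrite X_even in *. rewrite X_odd in *. pose proof (X_S n k). pose proof (pow2R_pos n).
     assert (0 < / 2^n) by (apply Rinv_0_lt_compat; auto).
     assert (Hs' : X n k <= s <= X n (S k)) by lra.
     cbn [sumd]. rewrite <- Rplus_assoc. rewrite (IHn k s Hk2 Hs'). rewrite (Hp_val f n k s Hk2 Hs').
     rewrite phi_left by (rewrite X_odd; lra). unfold coef. rewrite tt0_S, tt1_S, X_odd. change (tt2 n (S k)) with (X n (S k)). simpl. ring.
   + assert (Hk2 : (k < Nat.pow 2 n)%nat) by (simpl in Hk; lia).
     replace (2*k+1)%nat with (S (2*k)) in * by lia.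
     rewrite X_even2 in *. pose proof (X_odd n k). pose proof (X_S n k). pose proof (pow2R_pos n).
     assert (0 < / 2^n) by (apply Rinv_0_lt_compat; auto).
     assert (Hs' : X n k <= s <= X n (S k)) by lra.
     cbn [sumd]. rewrite <- Rplus_assoc. rewrite (IHn k s Hk2 Hs'). rewrite (Hp_val f n k s Hk2 Hs').
     rewrite phi_right by lra. unfold coef. rewrite tt0_S, tt1_S. change (tt2 n (S k)) with (X n (S k)). rewrite H.
     rewrite H0 in *. simpl. field. lra. Qed.

Lemma sumf_sumd G N : sum_f_R0 G N = sumd (S N) G.
Proof. induction N; simpl. ring. simpl in IHN. rewrite IHN. ring. Qed.
Lemma sumd_first n c : sumd (S n) (fun p => match p with O => c | S _ => 0 end) = c.
Proof. induction n. simpl. ring. cbn [sumd]. cbn [sumd] in IHn. rewrite IHn. ring. Qed.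

Lemma SN_interp f N k s : (k < Nat.pow 2 (S N))%nat -> X (S N) k <= s <= X (S N) (S k) ->
  SN f N s = f (X (S N) k) + (f (X (S N) (S k)) - f (X (S N) k)) * (s - X (S N) k) * 2 ^ (S N).
Proof. intros Hk Hs. rewrite <- interp_L by auto. unfold SN. rewrite sumf_sumd.
 transitivity (f 0 + sumd (S N) (fun p => Hp f p s + match p with O => (f 1 - f 0) * s | S _ => 0 end)).
 - f_equal. ring. apply sumd_ext. intros. unfold Hp. ring.
 - rewrite sumd_plus. rewrite sumd_first. ring. Qed.

Lemma Rpower_pos x y : 0 < Rpower x y. Proof. apply exp_pos. Qed.

Lemma r_facts a : 0 < a < 1 -> 0 < Rpower 2 (-a) < 1 /\ 1 < 2 * Rpower 2 (-a).
Proof. intros Ha. split. split. apply Rpower_pos.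
 rewrite <- (Rpower_O 2) by lra. apply Rpower_lt; lra.
 assert (Rpower 2 (- (1)) < Rpower 2 (-a)) by (apply Rpower_lt; lra).
 rewrite Rpower_Ropp, Rpower_1 in H by lra. lra. Qed.

Lemma rpow_n a n : Rpower 2 (INR n * a) * Rpower 2 (-a) ^ n = 1.
Proof. rewrite <- Rpower_pow by apply Rpower_pos. rewrite Rpower_mult, <- Rpower_plus.
 replace (INR n * a + - a * INR n) with 0 by ring. apply Rpower_O; lra. Qed.

Section V.
Variables (d : nat) (alpha C : R) (v : R -> nat -> R).
Hypothesis Ha : 0 < alpha < 1.
Hypothesis HC : forall p m : nat, (m <= Nat.pow 2 p)%nat ->
      Rpower 2 (INR p * alpha) * nrm d (coefv v p m) <= C.

Let r := Rpower 2 (-alpha).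
Definition Kv := C / (2 * r - 1) + 1.

Lemma C_nonneg : 0 <= C.
Proof. specialize (HC 0 0 ltac:(simpl; lia)). pose proof (Rpower_pos 2 (INR 0 * alpha)).
 pose proof (nrm_nonneg d (coefv v 0 0)). nra. Qed.

Lemma coef_bound p m i : (m <= Nat.pow 2 p)%nat -> (i < d)%nat ->
  Rabs (coef (fun u => v u i) p m) <= C * r ^ p.
Proof. intros Hm Hi. specialize (HC p m Hm).
 pose proof (nrm_coord d (coefv v p m) i Hi). unfold coefv in H.
 pose proof (rpow_n alpha p). fold r in H0.
 assert (0 < r ^ p) by (apply pow_lt; unfold r; apply Rpower_pos).
 apply Rle_trans with (r ^ p * (Rpower 2 (INR p * alpha) * nrm d (coefv v p m))).
 - unfold coefv. rewrite <- Rmult_assoc, (Rmult_comm (r^p)), H0. lra.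
 - rewrite Rmult_comm. apply Rmult_le_compat_r; lra. Qed.

Lemma Kv_facts : 0 < Kv /\ C <= Kv /\ C <= Kv * (2 * r - 1).
Proof. destruct (r_facts alpha Ha) as [[H1 H2] H3]. fold r in H1, H2, H3. pose proof C_nonneg.
 unfold Kv. split. assert (0 <= C / (2*r-1)) by (unfold Rdiv; apply Rmult_le_pos; [lra|left; apply Rinv_0_lt_compat; lra]). lra.
 split. assert (C <= C / (2*r-1)). { apply Rmult_le_reg_r with (2*r-1). lra. unfold Rdiv. rewrite Rmult_assoc, Rinv_l by lra. nra. } lra.
 rewrite Rmult_plus_distr_r. unfold Rdiv. rewrite Rmult_assoc, Rinv_l by lra. lra. Qed.

Lemma incr n k i : (k < Nat.pow 2 n)%nat -> (i < d)%nat ->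
  Rabs (v (X n (S k)) i - v (X n k) i) <= Kv * r ^ n.
Proof. intros Hk Hi. destruct (r_facts alpha Ha) as [[H1 H2] H3]. fold r in H1, H2, H3.
 destruct Kv_facts as [K1 [K2 K3]]. revert k Hk. induction n; intros k' Hk.
 - simpl in Hk. replace k' with 0%nat by lia. rewrite X_0. replace (X 0 1) with 1 by (unfold X; simpl; field).
   pose proof (coef_bound 0 0 i ltac:(simpl; lia) Hi). simpl in H. simpl. lra.
 - assert (Hr : 0 < r ^ n) by (apply pow_lt; lra).
   destruct (Nat.Even_or_Odd k') as [[k E]|[k E]]; subst k'.
   + assert (Hk2 : (k < Nat.pow 2 n)%nat) by (simpl in Hk; lia).
     pose proof (coef_bound n (S k) i Hk2 Hi). unfold coef in H. rewrite tt0_S, tt1_S in H. change (tt2 n (S k)) with (X n (S k)) in H.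
     specialize (IHn k Hk2). rewrite X_even.
     replace (v (X (S n) (S (2 * k))) i - v (X n k) i) with (((v (X n (S k)) i - v (X n k) i) + (2 * v (X (S n) (S (2 * k))) i - v (X n k) i - v (X n (S k)) i)) / 2) by field.
     unfold Rdiv. rewrite Rabs_mult, (Rabs_right (/2)) by lra. eapply Rle_trans.
     apply Rmult_le_compat_r. lra. apply Rabs_triang. assert (C * r^n <= Kv*(2*r-1)*r^n) by (apply Rmult_le_compat_r; lra). change (r ^ S n) with (r * r ^ n). assert (Kv*(2*r-1)*r^n = 2*(Kv*(r*r^n)) - Kv*r^n) by ring. lra.
   + assert (Hk2 : (k < Nat.pow 2 n)%nat) by (simpl in Hk; lia).
     replace (2*k+1)%nat with (S (2*k)) by lia.
     pose proof (coef_bound n (S k) i Hk2 Hi). unfold coef in H. rewrite tt0_S, tt1_S in H. change (tt2 n (S k)) with (X n (S k)) in H.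
     specialize (IHn k Hk2). rewrite X_even2.
     replace (v (X n (S k)) i - v (X (S n) (S (2 * k))) i) with (((v (X n (S k)) i - v (X n k) i) - (2 * v (X (S n) (S (2 * k))) i - v (X n k) i - v (X n (S k)) i)) / 2) by field.
     unfold Rdiv. rewrite Rabs_mult, (Rabs_right (/2)) by lra. eapply Rle_trans.
     apply Rmult_le_compat_r. lra. apply Rabs_triang. rewrite Rabs_Ropp. assert (C * r^n <= Kv*(2*r-1)*r^n) by (apply Rmult_le_compat_r; lra). change (r ^ S n) with (r * r ^ n). assert (Kv*(2*r-1)*r^n = 2*(Kv*(r*r^n)) - Kv*r^n) by ring. lra. Qed.

Definition Bv := nrm d (v 0) + nrm d (v 1) + Kv * r / (1 - r) + 1.

Lemma vbound n k i : (k <= Nat.pow 2 n)%nat -> (i < d)%nat -> Rabs (v (X n k) i) <= Bv.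
Proof. intros Hk Hi. destruct (r_facts alpha Ha) as [[H1 H2] H3]. fold r in H1, H2, H3.
 destruct Kv_facts as [K1 [K2 K3]].
 assert (G : forall n k, (k <= Nat.pow 2 n)%nat -> Rabs (v (X n k) i) <= nrm d (v 0) + nrm d (v 1) + Kv * (r - r ^ (S n)) / (1 - r)).
 { clear n k Hk. induction n; intros k' Hk.
   - pose proof (nrm_nonneg d (v 0)). pose proof (nrm_nonneg d (v 1)).
     replace (Kv * (r - r ^ 1) / (1 - r)) with 0 by (simpl; field; lra).
     simpl in Hk. destruct k' as [|[|]]; try lia.
     + rewrite X_0. pose proof (nrm_coord d (v 0) i Hi). lra.
     + replace (X 0 1) with 1 by (unfold X; simpl; field). pose proof (nrm_coord d (v 1) i Hi). lra.
   - assert (Hr : 0 < r ^ (S n)) by (apply pow_lt; lra).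
     assert (E : Kv * (r - r ^ S n) / (1 - r) + Kv * r ^ S n = Kv * (r - r ^ S (S n)) / (1 - r)) by (simpl; field; lra).
     destruct (Nat.Even_or_Odd k') as [[k E']|[k E']]; subst k'.
     + rewrite X_even. eapply Rle_trans. apply IHn. simpl in Hk; lia. pose proof (Rmult_le_pos Kv (r ^ S n) ltac:(lra) ltac:(lra)). lra.
     + replace (2*k+1)%nat with (S (2*k)) by lia. assert (Hk2 : (k < Nat.pow 2 n)%nat) by (simpl in Hk; lia).
       pose proof (incr (S n) (2*k) i ltac:(simpl; lia) Hi). rewrite X_even in H.
       specialize (IHn k ltac:(lia)).
       pose proof (Rabs_triang (v (X n k) i) (v (X (S n) (S (2 * k))) i - v (X n k) i)).
       replace (v (X n k) i + (v (X (S n) (S (2 * k))) i - v (X n k) i)) with (v (X (S n) (S (2 * k))) i) in H0 by ring. lra. }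
 eapply Rle_trans. apply G; auto. unfold Bv. assert (0 < r ^ S n) by (apply pow_lt; lra).
 assert (Kv * (r - r ^ S n) / (1 - r) <= Kv * r / (1 - r)). { unfold Rdiv. apply Rmult_le_compat_r. left; apply Rinv_0_lt_compat; lra. nra. } lra. Qed.

End V.
From Coquelicot Require Import Coquelicot.
Open Scope R_scope.

Lemma locally_R s e (P : R -> Prop) : 0 < e -> (forall y, Rabs (y - s) < e -> P y) -> locally s P.
Proof. intros He H. exists (mkposreal e He). intros y Hy. apply H. exact Hy. Qed.

Lemma deriv_aff g ga gb a b P s : a < s < b -> (forall u, a <= u <= b -> g u = ga + (gb - ga) * (u - a) * P) ->
  is_derive g s ((gb - ga) * P).
Proof. intros Hs H. apply is_derive_ext_loc with (fun u => ga + (gb - ga) * (u - a) * P).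
 - apply locally_R with (Rmin (s - a) (b - s)). apply Rmin_pos; lra.
   intros y Hy. symmetry. apply H. pose proof (Rmin_l (s-a) (b-s)). pose proof (Rmin_r (s-a) (b-s)).
   apply Rabs_lt_between in Hy. lra.
 - auto_derive. auto. ring. Qed.

Lemma poly_RInt A B a c : is_RInt (fun s => A + B * (s - a)) a c (A * (c - a) + B * (c - a) ^ 2 / 2).
Proof. assert (H := is_RInt_derive (fun s => A * (s - a) + B * (s - a) ^ 2 / 2) (fun s => A + B * (s - a)) a c).
 replace (A * (c - a) + B * (c - a) ^ 2 / 2) with (minus (A * (c - a) + B * (c - a) ^ 2 / 2) (A * (a - a) + B * (a - a) ^ 2 / 2)).
 apply H. intros x _. auto_derive. auto. field.
 intros x _. apply continuity_pt_filterlim. apply continuity_pt_plus. apply continuity_pt_const. intros u v; auto.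
 apply continuity_pt_scal. apply continuity_pt_minus. apply continuity_pt_id. apply continuity_pt_const. intros u v; auto.
 unfold minus, plus, opp. simpl. match goal with |- ?x = ?y => change (@eq R x y) end. rewrite Rminus_diag. field. Qed.

Lemma piece_RInt d (Fi Gi : nat -> R -> R) (Fa Fb Ga Gb : nat -> R) a b c P :
 0 < P -> b = a + / P -> a < c <= b ->
 (forall i s, (i < d)%nat -> a <= s <= b -> Fi i s = Fa i + (Fb i - Fa i) * (s - a) * P) ->
 (forall i s, (i < d)%nat -> a <= s <= b -> Gi i s = Ga i + (Gb i - Ga i) * (s - a) * P) ->
 is_RInt (fun s => sumd d (fun i => Fi i s * Derive (Gi i) s)) a c
   (sumd d (fun i => Fa i * ((Gb i - Ga i) * P)) * (c - a)
    + sumd d (fun i => (Fb i - Fa i) * P * ((Gb i - Ga i) * P)) * (c - a) ^ 2 / 2).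
Proof. intros HP Hb Hc HF HG.
 apply is_RInt_ext with (fun s => sumd d (fun i => Fa i * ((Gb i - Ga i) * P)) + sumd d (fun i => (Fb i - Fa i) * P * ((Gb i - Ga i) * P)) * (s - a)).
 2: apply poly_RInt.
 intros s Hs. rewrite Rmin_left in Hs by lra. rewrite Rmax_right in Hs by lra.
 rewrite Rmult_comm, <- sumd_scal, <- sumd_plus. apply sumd_ext. intros i Hi.
 rewrite (is_derive_unique _ _ _ (deriv_aff (Gi i) (Ga i) (Gb i) a b P s ltac:(lra) (fun u Hu => HG i u Hi Hu))).
 rewrite HF by (auto; lra). ring. Qed.

Lemma find_nat M y : 0 <= y < INR M -> exists j, (j < M)%nat /\ INR j <= y < INR (S j).
Proof. induction M; intros H. simpl in H; lra.
 destruct (Rlt_dec y (INR M)). destruct IHM as [j [Hj Hj2]]. lra. exists j; split; auto.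
 exists M. split. lia. split. lra. lra. Qed.

Lemma find_strict n s : 0 <= s < 1 -> exists j, (j < Nat.pow 2 n)%nat /\ X n j <= s < X n (S j).
Proof. intros Hs. pose proof (pow2R_pos n).
 destruct (find_nat (Nat.pow 2 n) (s * 2 ^ n)) as [j [Hj Hj2]].
 { rewrite pow_INR. replace (INR 2) with 2 by (simpl; ring). split. apply Rmult_le_pos; lra. rewrite <- (Rmult_1_l (2^n)) at 2. apply Rmult_lt_compat_r; lra. }
 exists j. split; auto. unfold X. split.
 apply Rmult_le_reg_r with (2^n); auto. unfold Rdiv. rewrite Rmult_assoc, Rinv_l by lra. lra.
 apply Rmult_lt_reg_r with (2^n); auto. unfold Rdiv. rewrite Rmult_assoc, Rinv_l by lra. lra. Qed.

Lemma find_le n s : 0 <= s <= 1 -> exists j, (j < Nat.pow 2 n)%nat /\ X n j <= s <= X n (S j).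
Proof. intros Hs. destruct (Req_dec s 1).
 - exists (Nat.pow 2 n - 1)%nat. pose proof (Nat.pow_nonzero 2 n ltac:(lia)). split. lia.
   replace (S (Nat.pow 2 n - 1)) with (Nat.pow 2 n) by lia. rewrite X_top. split. 2: lra.
   subst. rewrite <- (X_top n). apply X_mono; lia.
 - destruct (find_strict n s ltac:(lra)) as [j [Hj Hj2]]. exists j; split; auto; lra. Qed.

Section I.
Variables (d N : nat) (v : R -> nat -> R) (DF : nat -> (nat -> R) -> R).

Definition Fi (i : nat) (s : R) := SN (fun u => DF i (v u)) N s.
Definition Gi (i : nat) (s : R) := SN (fun u => v u i) N s.
Definition integrand (s : R) := sumd d (fun i => Fi i s * Derive (Gi i) s).

Definition PV (k : nat) (c : R) :=
  let a := X (S N) k in let b := X (S N) (S k) in let P := 2 ^ (S N) in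
  sumd d (fun i => DF i (v a) * ((v b i - v a i) * P)) * (c - a)
    + sumd d (fun i => (DF i (v b) - DF i (v a)) * P * ((v b i - v a i) * P)) * (c - a) ^ 2 / 2.

Lemma PV_RInt k c : (k < Nat.pow 2 (S N))%nat -> X (S N) k <= c <= X (S N) (S k) ->
  is_RInt integrand (X (S N) k) c (PV k c).
Proof. intros Hk Hc. destruct (Req_dec c (X (S N) k)) as [E|E].
 - subst c. assert (E : PV k (X (S N) k) = 0) by (unfold PV; cbv zeta; rewrite Rminus_diag; field).
   rewrite E. exact (is_RInt_point integrand _).
 - unfold PV. apply piece_RInt with (X (S N) (S k)).
   apply pow2R_pos. apply X_S. lra.
   + intros i s Hi Hs. unfold Fi. apply (SN_interp (fun u => DF i (v u)) N k s); auto.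
   + intros i s Hi Hs. unfold Gi. apply (SN_interp (fun u => v u i) N k s); auto. Qed.

Definition TV (k : nat) := sumd d (fun i => (DF i (v (X (S N) k)) + DF i (v (X (S N) (S k)))) / 2 * (v (X (S N) (S k)) i - v (X (S N) k) i)).

Lemma PV_full k : PV k (X (S N) (S k)) = TV k.
Proof. unfold PV, TV. cbv zeta. pose proof (pow2R_pos (S N)).
 assert (E : X (S N) (S k) - X (S N) k = / 2 ^ S N) by (rewrite (X_S (S N) k); ring). rewrite E.
 set (P := 2 ^ S N) in *.
 transitivity (sumd d (fun i => / P * (DF i (v (X (S N) k)) * ((v (X (S N) (S k)) i - v (X (S N) k) i) * P))
   + ((/ P) ^ 2 / 2) * ((DF i (v (X (S N) (S k))) - DF i (v (X (S N) k))) * P * ((v (X (S N) (S k)) i - v (X (S N) k) i) * P)))).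
 - rewrite sumd_plus, !sumd_scal. field. lra.
 - apply sumd_ext. intros i Hi. field. lra. Qed.

Lemma grid_RInt k : (k <= Nat.pow 2 (S N))%nat -> is_RInt integrand 0 (X (S N) k) (sumd k TV).
Proof. induction k; intros Hk.
 - rewrite X_0. simpl. apply (is_RInt_point integrand 0).
 - cbn [sumd]. assert (H1 := IHk ltac:(lia)).
   assert (H2 : is_RInt integrand (X (S N) k) (X (S N) (S k)) (TV k)).
   { rewrite <- PV_full. apply PV_RInt. lia. split. apply X_mono; lia. lra. }
   exact (is_RInt_Chasles _ _ _ _ _ _ H1 H2). Qed.

Lemma total_RInt t k : (k < Nat.pow 2 (S N))%nat -> X (S N) k <= t <= X (S N) (S k) ->
  is_RInt integrand 0 t (sumd k TV + PV k t).
Proof. intros Hk Ht. assert (H1 := grid_RInt k ltac:(lia)). assert (H2 := PV_RInt k t Hk Ht).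
 exact (is_RInt_Chasles _ _ _ _ _ _ H1 H2). Qed.

Lemma IntFdG_holds t : 0 <= t <= 1 ->
  IntFdG d (SNv (fun s i => DF i (v s)) N) (SNv v N) t (RInt integrand 0 t).
Proof. intros Ht.
 destruct (find_le (S N) t Ht) as [k [Hk Htk]].
 assert (Hex : ex_RInt integrand 0 t) by (eexists; apply total_RInt; eauto).
 exists (fun s i => Derive (Gi i) s), (map (fun j => X (S N) j) (seq 0 (S (Nat.pow 2 (S N))))).
 split.
 - intros s Hs Hn i Hi. destruct (find_strict (S N) s ltac:(lra)) as [j [Hj Hsj]].
   assert (Hne : s <> X (S N) j).
   { intros E. apply Hn. rewrite E. apply in_map. apply in_seq. lia. }
   apply is_derive_Reals.
   assert (D : is_derive (Gi i) s ((v (X (S N) (S j)) i - v (X (S N) j) i) * 2 ^ S N)).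
   { apply deriv_aff with (X (S N) j) (X (S N) (S j)). lra. intros u Hu. unfold Gi. apply (SN_interp (fun u => v u i) N j u); auto. }
   rewrite (is_derive_unique _ _ _ D). unfold SNv. exact D.
 - exists (ex_RInt_Reals_0 _ _ _ Hex). rewrite <- RInt_Reals. unfold integrand. reflexivity. Qed.

End I.

Lemma fin_choice_delta d (Q : nat -> R -> Prop) :
  (forall i, (i<d)%nat -> exists del, del > 0 /\ Q i del) ->
  (forall i del del', Q i del -> 0 < del' <= del -> Q i del') ->
  exists del, del > 0 /\ forall i, (i<d)%nat -> Q i del.
Proof. intros H M. induction d.
 - exists 1. split. lra. intros; lia.
 - destruct IHd as [d1 [H1 H1']]. intros; apply H; lia.
   destruct (H d ltac:(lia)) as [d2 [H2 H2']]. exists (Rmin d1 d2). split. apply Rmin_pos; auto.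
   intros i Hi. destruct (Nat.eq_dec i d). subst. eapply M; [apply H2'|split; [apply Rmin_pos; auto|apply Rmin_r]].
   eapply M; [apply H1'; lia|split; [apply Rmin_pos; auto|apply Rmin_l]]. Qed.

Lemma vec_cont d (v : R -> nat -> R) t : (forall i, (i<d)%nat -> continuous_on01 (fun s => v s i)) -> 0 <= t <= 1 ->
  forall e, e > 0 -> exists del, del > 0 /\ forall s, 0 <= s <= 1 -> Rabs (s - t) < del -> nrm d (vsub (v s) (v t)) < e.
Proof. intros Hc Ht e He.
 destruct (fin_choice_delta d (fun i del => forall s, 0 <= s <= 1 -> Rabs (s - t) < del -> Rabs (v s i - v t i) < e / 2)) as [del [Hd H]].
 - intros i Hi. apply (Hc i Hi t Ht (e/2)). lra.
 - intros i del del' H1 H2 s Hs Hst. apply H1; auto. lra.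
 - exists del. split; auto. intros s Hs Hst. apply Rle_lt_trans with (e/2). apply nrm_le. lra.
   intros i Hi. left. unfold vsub. apply H; auto. lra. Qed.

Lemma pow_small q y : 0 <= q < 1 -> y > 0 -> exists N0, forall n, (n >= N0)%nat -> q ^ n < y.
Proof. intros Hq Hy. destruct (pow_lt_1_zero q ltac:(rewrite Rabs_right; lra) y Hy) as [N0 H].
 exists N0. intros n Hn. specialize (H n Hn). eapply Rle_lt_trans; [apply Rle_abs|exact H]. Qed.

Lemma PV_form d N v DF k t : let a := X (S N) k in let b := X (S N) (S k) in
  PV d N v DF k t = ((t - a) * 2 ^ S N) * sumd d (fun i => DF i (v a) * (v b i - v a i))
    + ((t - a) * 2 ^ S N) ^ 2 / 2 * sumd d (fun i => (DF i (v b) - DF i (v a)) * (v b i - v a i)).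
Proof. intros a b. unfold PV. cbv zeta. fold a b.
 transitivity (sumd d (fun i => (t - a) * (DF i (v a) * ((v b i - v a i) * 2 ^ S N))
     + ((t - a) ^ 2 / 2) * ((DF i (v b) - DF i (v a)) * 2 ^ S N * ((v b i - v a i) * 2 ^ S N)))).
 - rewrite sumd_plus, !sumd_scal. field.
 - rewrite <- !sumd_scal, <- sumd_plus. apply sumd_ext; intros; field. Qed.

Lemma abs_tau tau A B : 0 <= tau <= 1 -> Rabs (tau * A + tau ^ 2 / 2 * B) <= Rabs A + Rabs B.
Proof. intros Ht. eapply Rle_trans. apply Rabs_triang. rewrite !Rabs_mult.
 rewrite (Rabs_right tau) by lra. rewrite (Rabs_right (tau^2/2)) by (apply Rle_ge; apply Rmult_le_pos; [apply pow_le; lra|lra]).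
 pose proof (Rabs_pos A). pose proof (Rabs_pos B). assert (tau^2/2 <= 1) by (simpl; nra). nra. Qed.

Section Main.
Variables (d : nat) (alpha eps C : R) (v : R -> nat -> R) (F : (nat -> R) -> R)
  (DF : nat -> (nat -> R) -> R) (D2F : nat -> nat -> (nat -> R) -> R).
Hypothesis Ha : 0 < alpha < 1.
Hypothesis HC : forall p m : nat, (m <= Nat.pow 2 p)%nat ->
      Rpower 2 (INR p * alpha) * nrm d (coefv v p m) <= C.
Hypothesis Hcont : forall i, (i < d)%nat -> continuous_on01 (fun t => v t i).
Hypothesis Heps : eps > 0.
Hypothesis Hexp : (2 + eps) * alpha > 1.
Hypothesis HF : C2eps d eps F DF D2F.

Let r := Rpower 2 (-alpha).
Let K := Kv alpha C.
Let q := 2 * Rpower r eps * r ^ 2.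

Lemma q_facts : 0 < q < 1.
Proof. unfold q, r. split. pose proof (Rpower_pos 2 (-alpha)). pose proof (Rpower_pos (Rpower 2 (-alpha)) eps).
 apply Rmult_lt_0_compat. lra. apply pow_lt; auto.
 rewrite Rpower_mult. simpl. rewrite Rmult_1_r.
 rewrite <- (Rpower_1 2) at 1 by lra. rewrite <- !Rpower_plus.
 eapply Rlt_le_trans. apply Rpower_lt with (z := 0). lra. nra. rewrite Rpower_O; lra. Qed.

Lemma err_sum : exists Ka, 0 <= Ka /\ forall N k, (k <= Nat.pow 2 (S N))%nat ->
  Rabs (sumd k (fun j => F (v (X (S N) (S j))) - F (v (X (S N) j)) - TV d N v DF j)) <= Ka * q ^ (S N).
Proof. destruct (r_facts alpha Ha) as [[H1 H2] H3]. fold r in H1, H2, H3.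
 destruct (Kv_facts d alpha C v Ha HC) as [K1 [K2 K3]]. fold K in K1, K2, K3.
 assert (HB : Bv d alpha C v > 0).
 { unfold Bv. fold r. fold K. pose proof (nrm_nonneg d (v 0)). pose proof (nrm_nonneg d (v 1)).
   assert (0 <= K * r / (1 - r)). { unfold Rdiv. apply Rmult_le_pos. nra. left; apply Rinv_0_lt_compat; lra. } lra. }
 destruct (trap_F d eps F DF D2F HF Heps _ HB) as [Ct [HCt0 HCt]].
 exists (Ct * Rpower K eps * K ^ 2). split.
 { pose proof (Rpower_pos K eps). apply Rmult_le_pos. apply Rmult_le_pos; lra. apply pow_le; lra. }
 intros N k Hk. set (n := S N) in *.
 assert (Hrn : 0 < r ^ n) by (apply pow_lt; lra).
 set (M := K * r ^ n). assert (HM : 0 < M) by (unfold M; apply Rmult_lt_0_compat; auto).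
 set (B := Ct * Rpower M eps * M ^ 2).
 assert (HB0 : 0 <= B). { pose proof (Rpower_pos M eps). unfold B. apply Rmult_le_pos. apply Rmult_le_pos; lra. apply pow_le; lra. }
 apply Rle_trans with (INR k * B).
 - apply sumd_le_const. intros j Hj. unfold TV. fold n.
   eapply Rle_trans. apply HCt.
   + intros i Hi. apply (vbound d alpha C v Ha HC). lia. auto.
   + intros i Hi. apply (vbound d alpha C v Ha HC). lia. auto.
   + assert (HH : nrm d (vsub (v (X n (S j))) (v (X n j))) <= M).
     { apply nrm_le. lra. intros i Hi. unfold vsub, M, K. apply (incr d alpha C v Ha HC). lia. auto. }
     pose proof (nrm_nonneg d (vsub (v (X n (S j))) (v (X n j)))).
     unfold B. apply Rmult_le_compat.
     * apply Rmult_le_pos; auto. apply rpow_nonneg.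
     * apply pow_le; auto.
     * apply Rmult_le_compat_l; auto. replace (Rpower M eps) with (rpow M eps).
       apply rpow_mono; auto. unfold rpow. destruct Rlt_dec. reflexivity. lra.
     * apply pow_incr; lra.
 - assert (INR k <= 2 ^ n). { replace (2 ^ n) with (INR (Nat.pow 2 n)). apply le_INR; auto.
     rewrite pow_INR. f_equal. }
   apply Rle_trans with (2 ^ n * B). apply Rmult_le_compat_r; auto.
   right. unfold B, M, q.
   rewrite <- (Rpower_mult_distr K (r ^ n)) by lra.
   rewrite <- (Rpower_pow n r) by lra. rewrite Rpower_mult.
   replace (Rpower r (INR n * eps)) with (Rpower r eps ^ n).
   2:{ rewrite <- Rpower_pow by apply Rpower_pos. rewrite Rpower_mult. f_equal. ring. }
   rewrite (Rpower_pow n r) by lra.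
   rewrite !Rpow_mult_distr. rewrite <- !pow_mult. rewrite Nat.mul_comm. rewrite pow_mult. ring. Qed.


Lemma conv t : 0 <= t <= 1 -> Un_cv (fun N => RInt (integrand d N v DF) 0 t) (F (v t) - F (v 0)).
Proof. intros Ht e He.
 destruct (r_facts alpha Ha) as [[H1 H2] H3]. fold r in H1, H2, H3.
 destruct (Kv_facts d alpha C v Ha HC) as [K1 [K2 K3]]. fold K in K1, K2, K3.
 destruct err_sum as [Ka [HKa0 HKa]].
 destruct q_facts as [Q1 Q2].
 destruct (pow_small q (e/3/(Ka+1)) ltac:(split; lra)) as [N1 HN1]. { apply Rdiv_lt_0_compat; lra. }
 destruct HF as [HF1 [HDF _]].
 destruct (Frechet_cont d F DF HF1 (v t) (e/3)) as [d1 [Hd1 HFc]]. lra.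
 destruct (fin_choice_delta d (fun i del => forall y, nrm d (vsub y (v t)) < del -> Rabs (DF i y - DF i (v t)) < 1)) as [d2 [Hd2 HDFc]].
 { intros i Hi. apply (Frechet_cont d (DF i) (D2F i) (HDF i Hi) (v t) 1). lra. }
 { intros i del del' H H' y Hy. apply H. lra. }
 destruct (vec_cont d v t Hcont Ht (Rmin d1 d2)) as [d3 [Hd3 Hvc]]. apply Rmin_pos; auto.
 destruct (pow_small (/2) d3 ltac:(lra) Hd3) as [N2 HN2].
 set (D0 := sumd d (fun i => Rabs (DF i (v t)) + 3)).
 assert (HD0 : 0 <= D0) by (apply sumd_nonneg; intros; pose proof (Rabs_pos (DF i (v t))); lra).
 destruct (pow_small r (e/3/(K*D0+1)) ltac:(lra)) as [N3 HN3]. { apply Rdiv_lt_0_compat. lra. nra. }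
 exists (max N1 (max N2 N3)). intros N HN. set (n := S N).
 assert (Hn1 : (n >= N1)%nat) by (unfold n; lia). assert (Hn2 : (n >= N2)%nat) by (unfold n; lia). assert (Hn3 : (n >= N3)%nat) by (unfold n; lia).
 specialize (HN1 n Hn1). specialize (HN2 n Hn2). specialize (HN3 n Hn3).
 destruct (find_le n t Ht) as [k [Hk Htk]].
 rewrite (is_RInt_unique _ _ _ _ (total_RInt d N v DF t k Hk Htk)).
 fold n in Htk |- *.
 set (a := X n k) in *. set (b := X n (S k)) in *.
 assert (Hab : b = a + / 2 ^ n) by (unfold a, b; apply X_S).
 rewrite <- pow_inv in Hab. pose proof (pow2R_pos n).
 assert (Ha01 : 0 <= a <= 1). { split. unfold a; rewrite <- (X_0 n); apply X_mono; lia. lra. }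
 assert (Hb01 : 0 <= b <= 1). { split. lra. unfold b; rewrite <- (X_top n); apply X_mono; lia. }
 assert (Hva : nrm d (vsub (v a) (v t)) < Rmin d1 d2) by (apply Hvc; auto; apply Rabs_lt_between; lra).
 assert (Hvb : nrm d (vsub (v b) (v t)) < Rmin d1 d2) by (apply Hvc; auto; apply Rabs_lt_between; lra).
 pose proof (Rmin_l d1 d2). pose proof (Rmin_r d1 d2).
 assert (E1 : Rabs (sumd k (fun j => F (v (X n (S j))) - F (v (X n j)) - TV d N v DF j)) < e / 3).
 { eapply Rle_lt_trans. apply HKa. apply Nat.lt_le_incl. exact Hk. fold n. 
   assert (0 <= q ^ n) by (apply pow_le; lra).
   apply Rle_lt_trans with ((Ka + 1) * q ^ n). nra.
   apply Rlt_le_trans with ((Ka + 1) * (e / 3 / (Ka + 1))). apply Rmult_lt_compat_l; lra. right; field; lra. }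
 assert (E2 : Rabs (F (v t) - F (v a)) < e / 3).
 { rewrite Rabs_minus_sym. apply HFc. lra. }
 assert (E3 : Rabs (PV d N v DF k t) < e / 3).
 { rewrite PV_form. fold n a b.
   assert (Hrn : 0 <= r ^ n) by (apply pow_le; lra).
   assert (Hdv : forall i, (i < d)%nat -> Rabs (v b i - v a i) <= K * r ^ n).
   { intros i Hi. unfold a, b, K. apply (incr d alpha C v Ha HC); auto. }
   assert (Hda : forall i, (i < d)%nat -> Rabs (DF i (v a) - DF i (v t)) < 1) by (intros; apply HDFc; auto; lra).
   assert (Hdb : forall i, (i < d)%nat -> Rabs (DF i (v b) - DF i (v t)) < 1) by (intros; apply HDFc; auto; lra).
   eapply Rle_lt_trans. apply abs_tau.
   { split. apply Rmult_le_pos; lra. apply Rmult_le_reg_r with (/ 2 ^ n). apply Rinv_0_lt_compat; lra.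
     rewrite Rmult_assoc, Rinv_r by lra. rewrite pow_inv in Hab. lra. }
   eapply Rle_lt_trans. apply Rplus_le_compat; apply sumd_abs.
   rewrite <- sumd_plus.
   apply Rle_lt_trans with (sumd d (fun i => (Rabs (DF i (v t)) + 3) * (K * r ^ n))).
   - apply sumd_le. intros i Hi. rewrite !Rabs_mult. specialize (Hdv i Hi). specialize (Hda i Hi). specialize (Hdb i Hi).
     pose proof (Rabs_pos (v b i - v a i)).
     assert (Rabs (DF i (v a)) <= Rabs (DF i (v t)) + 1).
     { pose proof (Rabs_triang (DF i (v a) - DF i (v t)) (DF i (v t))). replace (DF i (v a) - DF i (v t) + DF i (v t)) with (DF i (v a)) in H6 by ring. lra. }
     assert (Rabs (DF i (v b) - DF i (v a)) <= 2).
     { replace (DF i (v b) - DF i (v a)) with ((DF i (v b) - DF i (v t)) - (DF i (v a) - DF i (v t))) by ring.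
       eapply Rle_trans. apply Rabs_triang. rewrite Rabs_Ropp. lra. }
     pose proof (Rabs_pos (DF i (v a))). pose proof (Rabs_pos (DF i (v b) - DF i (v a))). nra.
   - rewrite (sumd_ext d _ (fun i => (K * r ^ n) * (Rabs (DF i (v t)) + 3))) by (intros; ring).
     rewrite sumd_scal. fold D0.
     apply Rle_lt_trans with ((K * D0 + 1) * r ^ n). nra.
     apply Rlt_le_trans with ((K * D0 + 1) * (e / 3 / (K * D0 + 1))). apply Rmult_lt_compat_l. nra. auto. right; field. nra. }
 unfold R_dist.
 replace (sumd k (TV d N v DF) + PV d N v DF k t - (F (v t) - F (v 0)))
   with (- sumd k (fun j => F (v (X n (S j))) - F (v (X n j)) - TV d N v DF j) - (F (v t) - F (v a)) + PV d N v DF k t).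
 - eapply Rle_lt_trans. apply Rabs_triang. eapply Rle_lt_trans. apply Rplus_le_compat_r. apply Rabs_triang.
   rewrite !Rabs_Ropp. lra.
 - rewrite sumd_minus. rewrite (sumd_telescope k (fun j => F (v (X n j)))). rewrite X_0. fold a. ring. Qed.

End Main.

Theorem mainTheorem14 :
  forall (d : nat) (alpha eps : R) (v : R -> nat -> R)
    (F : (nat -> R) -> R) (DF : nat -> (nat -> R) -> R)
    (D2F : nat -> nat -> (nat -> R) -> R),
    1 / 3 < alpha < 1 ->
    CalphaV d alpha v ->
    eps > 0 ->
    (2 + eps) * alpha > 1 ->
    C2eps d eps F DF D2F ->
    forall t, 0 <= t <= 1 ->
      exists I : nat -> R,
        (forall N : nat,
           IntFdG d (SNv (fun s i => DF i (v s)) N) (SNv v N) t (I N)) /\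
        Un_cv I (F (v t) - F (v 0)).
Proof.
  intros d alpha eps v F DF D2F Ha [Hcont [C [_ HC]]] Heps Hexp HF t Ht.
  exists (fun N => RInt (integrand d N v DF) 0 t). split.
  - intros N. apply IntFdG_holds; auto.
  - apply (conv d alpha eps C v F DF D2F); auto. lra.
Qed.
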